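(* Consider the system $$\dot v=(-\mu_1-p_{11}v^2+p_{12}A^2)v-M_2 s,\quad \dot A=(-\mu_2-p_{21}v^2+p_{22}A^2)A+M_3 s,\quad \dot s=2\alpha(v+M_1 s)s,$$ under the standing assumptions of the context, and fix $\mu_2=\mu_2^0>0$. If $\mu_1<0$ is taken sufficiently close to $0$, then ''the solution'' satisfies $s(t)=O(|\mu_1|)$ for all $t>0$.
   Context: Standing assumptions: $\alpha>0$, $M_1\in\mathbb R$, $M_2>0$, $M_3>0$, $p_{11},p_{12},p_{21},p_{22}>0$, $p_{12}p_{21}<p_{11}p_{22}$. (The paper's further hypotheses on the underlying PDE impose no condition on this ODE.) For $\mu_1<0$ let $v_{\rm ep2}=\sqrt{-\mu_1/p_{11}}$ and $\widetilde{\mathrm{EP}}_2^\pm=(\pm v_{\rm ep2},0,0)$ in $(v,A,s)$-coordinates; $\widetilde{\mathrm{EP}}_2^+$ has the positive eigenvalue $2\alpha v_{\rm ep2}$, and ''the solution'' is the trajectory emanating from $\widetilde{\mathrm{EP}}_2^+$ at $t=-\infty$ along this unstable direction into $s>0$. $O(|\mu_1|)$ means bounded by a constant times $|\mu_1|$ as $\mu_1\to0$. *)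

(* Defs.v *)
From Stdlib Require Import Reals.
From Coquelicot Require Import Coquelicot.
Open Scope R_scope.

Definition rhs_v (mu1 p11 p12 M2 : R) (v A s : R) : R :=
  (- mu1 - p11 * v ^ 2 + p12 * A ^ 2) * v - M2 * s.
Definition rhs_A (mu2 p21 p22 M3 : R) (v A s : R) : R :=
  (- mu2 - p21 * v ^ 2 + p22 * A ^ 2) * A + M3 * s.
Definition rhs_s (alpha M1 : R) (v s : R) : R :=
  2 * alpha * (v + M1 * s) * s.

Definition v_ep2 (mu1 p11 : R) : R := sqrt (- mu1 / p11).

(* (v, A, s), defined on (-oo, T) (T possibly +oo), is a solution of the
   system which emanates from EP2~^+ = (v_ep2, 0, 0) at t = -oo and lies in
   s > 0, i.e. it is the branch of the (one-dimensional) unstable manifold of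
   EP2~^+ entering s > 0: "the solution". *)
Definition unstable_branch_solution
    (alpha M1 M2 M3 p11 p12 p21 p22 mu1 mu2 : R)
    (T : Rbar) (v A s : R -> R) : Prop :=
  (forall t : R, Rbar_lt t T ->
      is_derive v t (rhs_v mu1 p11 p12 M2 (v t) (A t) (s t)) /\
      is_derive A t (rhs_A mu2 p21 p22 M3 (v t) (A t) (s t)) /\
      is_derive s t (rhs_s alpha M1 (v t) (s t))) /\
  is_lim v m_infty (v_ep2 mu1 p11) /\
  is_lim A m_infty 0 /\
  is_lim s m_infty 0 /\
  (forall t : R, Rbar_lt t T -> 0 < s t).

(* Main.v *)
Require Import Defs.
From Stdlib Require Import Reals Lra Psatz Classical.
From Coquelicot Require Import Coquelicot.
Open Scope R_scope.


Lemma core_sbound (alpha M2 m lam c Cs v s : R) :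
  0 < alpha -> 0 < M2 -> 0 < m -> 0 < c ->
  Cs * (4 * M2) = 5 * alpha * c -> 320 * lam ^ 2 * m <= c ->
  v * v + M2 / alpha * s + lam * m * v <= c * m ->
  s <= Cs * m.
Proof.
  intros Ha HM2 Hm Hc HCs Hl H.
  assert (Hsg : M2 / alpha * s * alpha = M2 * s) by (field; lra).
  set (sg := M2 / alpha * s) in *.
  assert (H1 : sg <= 5 / 4 * c * m).
  { assert (0 <= (v + lam * m / 2) ^ 2) by apply pow2_ge_0.
    assert (lam ^ 2 * m * m <= c / 320 * m) by nra. nra. }
  assert (H2 : M2 * s <= 5/4 * c * m * alpha) by nra.
  assert (Cs * m * (4 * M2) = 5 * alpha * c * m) by (rewrite <- HCs; ring).
  nra.
Qed.

Lemma core_psi (P alpha M2 M1 p12 m lam c Cs eta v A s : R) :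
  0 < P -> 0 < alpha -> 0 < M2 -> 0 < p12 -> 0 < m -> 0 < c ->
  c * P = 2 -> Cs * (4 * M2) = 5 * alpha * c ->
  4 * Rabs M1 * Cs <= lam -> 108 <= lam * alpha -> 1 <= lam ->
  320 * lam ^ 2 * m <= c -> eta * (8 * p12) = 1 ->
  0 < s -> A * A <= eta * m ->
  v * v + M2 / alpha * s + lam * m * v = c * m ->
  (2 * v + lam * m) * ((m - P * v ^ 2 + p12 * A ^ 2) * v - M2 * s)
   + M2 / alpha * (2 * alpha * (v + M1 * s) * s) < 0.
Proof.
  intros HP Ha HM2 Hp12 Hm Hc HcP HCs HL1 HL2 HL3 Hsm Heta Hs HA H.
  assert (HsC : s <= Cs * m) by (eapply (core_sbound alpha M2 m lam c Cs v s); auto; lra).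
  assert (Hsg : M2 / alpha * s * alpha = M2 * s) by (field; lra).
  assert (Hexp : (2 * v + lam * m) * ((m - P * v ^ 2 + p12 * A ^ 2) * v - M2 * s)
   + M2 / alpha * (2 * alpha * (v + M1 * s) * s) =
   (m - P * v ^ 2 + p12 * A ^ 2) * (2 * v * v + lam * m * v) - M2 * s * (lam * m - 2 * M1 * s))
   by (field; lra).
  rewrite Hexp. clear Hexp.
  set (sg := M2 / alpha * s) in *.
  assert (Hsgp : 0 < sg) by (unfold sg; apply Rmult_lt_0_compat; [apply Rdiv_lt_0_compat|]; lra).
  assert (Hl2 : lam ^ 2 * m * m <= c / 320 * m) by nra.
  assert (B1 : v * v <= 3 * c * m).
  { assert (0 <= (v + lam * m) ^ 2) by apply pow2_ge_0. nra. }
  assert (HpA : p12 * (A * A) <= m / 8).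
  { assert (p12 * (A * A) <= p12 * (eta * m)) by nra.
    assert (p12 * (eta * m) = m / 8) by (field_simplify_eq; nra). lra. }
  assert (HA2 : p12 * A ^ 2 = p12 * (A * A)) by ring.
  rewrite HA2.
  assert (HM1s : M1 * s <= Rabs M1 * s) by (apply Rmult_le_compat_r; [lra | apply Rle_abs]).
  assert (HM1C : Rabs M1 * s <= Rabs M1 * (Cs * m)) by (apply Rmult_le_compat_l; [apply Rabs_pos | lra]).
  assert (K1 : 2 * M1 * s <= lam * m / 2) by nra.
  assert (Hlam0 : 0 < lam) by lra.
  destruct (Rle_or_lt (27 * c * m) (s * M2 * lam)) as [Hcase | Hcase].
  - assert (T1 : M2 * s * (lam * m - 2 * M1 * s) >= 27 / 2 * c * m * m).
    { assert (M2 * s * (lam * m - 2 * M1 * s) >= M2 * s * (lam * m / 2)).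
      { apply Rle_ge, Rmult_le_compat_l; [nra | lra]. }
      nra. }
    set (X := 2 * v * v + lam * m * v).
    assert (HX : X <= 4 * c * m) by (unfold X; lra).
    assert (T2 : (m - P * v ^ 2 + p12 * (A * A)) * X <= 11 / 2 * c * m * m).
    { destruct (Rle_or_lt 0 X) as [HX0 | HX0].
      - assert (Q1 : m - P * v ^ 2 + p12 * (A * A) <= 9 / 8 * m).
        { assert (0 <= P * v ^ 2) by (apply Rmult_le_pos; [lra | apply pow2_ge_0]). lra. }
        assert ((m - P * v ^ 2 + p12 * (A * A)) * X <= 9 / 8 * m * X) by (apply Rmult_le_compat_r; lra).
        nra.
      - assert (HXl : - (lam ^ 2 * m * m / 8) <= X).
        { unfold X. assert (0 <= (v + lam * m / 4) ^ 2) by apply pow2_ge_0. nra. }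
        assert (HQ : (m - P * v ^ 2 + p12 * (A * A)) * X <= - P * v ^ 2 * X).
        { assert (0 <= p12 * (A * A)) by nra. nra. }
        assert (HvX : - P * v ^ 2 * X <= P * v ^ 2 * (lam ^ 2 * m * m / 8)).
        { assert (0 <= P * v ^ 2) by (apply Rmult_le_pos; [lra | apply pow2_ge_0]). nra. }
        assert (P * v ^ 2 * (lam ^ 2 * m * m / 8) <= P * (3 * c * m) * (c / 320 * m / 8)).
        { assert (v ^ 2 = v * v) by ring.
          apply Rmult_le_compat; try nra. }
        assert (P * (3 * c * m) * (c / 320 * m / 8) = 3 * 2 * c * m * m / 2560) by
          (replace (P * (3 * c * m) * (c / 320 * m / 8)) with (c * P * (3 * c * m * m) / 2560) by field;
           rewrite HcP; field).
        assert (0 <= c * m * m) by (apply Rmult_le_pos; nra). lra. }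
    assert (0 < c * m * m) by (apply Rmult_lt_0_compat; nra). lra.
  - assert (Hsg1 : sg * 108 < 27 * c * m).
    { assert (sg * 108 <= sg * (lam * alpha)) by (apply Rmult_le_compat_l; lra).
      assert (sg * (lam * alpha) = s * M2 * lam) by (rewrite <- (Rmult_comm alpha); unfold sg; field; lra).
      lra. }
    assert (Hv1 : v * v + lam * m * v > 3 / 4 * c * m) by lra.
    assert (Hlv : lam * m * v <= 3 / 16 * c * m).
    { destruct (Rle_or_lt (lam * m * v) (3 / 16 * c * m)) as [h|h]; [exact h|].
      exfalso.
      assert ((lam * m * v) ^ 2 <= c / 320 * m * (3 * c * m)).
      { replace ((lam * m * v) ^ 2) with ((lam ^ 2 * m * m) * (v * v)) by ring.
        apply Rmult_le_compat; try nra. }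
      nra. }
    assert (Hv2 : P * (v * v) > 9 / 8 * m).
    { assert (v * v > 9 / 16 * c * m) by lra.
      assert (P * (v * v) > P * (9 / 16 * c * m)) by (apply Rmult_lt_compat_l; lra).
      replace (P * (9 / 16 * c * m)) with (c * P * (9/16 * m)) in H1 by ring.
      rewrite HcP in H1. lra. }
    assert (HQ : m - P * v ^ 2 + p12 * (A * A) < 0).
    { replace (v ^ 2) with (v * v) by ring. lra. }
    assert (HX : 0 < 2 * v * v + lam * m * v) by nra.
    assert ((m - P * v ^ 2 + p12 * (A * A)) * (2 * v * v + lam * m * v) < 0) by nra.
    assert (0 < M2 * s * (lam * m - 2 * M1 * s)).
    { assert (0 < lam * m) by nra. apply Rmult_lt_0_compat; [nra | lra]. }
    lra.
Qed.

Lemma core_A (mu2 M3 p21 p22 m eta Cs v A s : R) :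
  0 < mu2 -> 0 < M3 -> 0 < p21 -> 0 < p22 -> 0 < m -> 0 < eta ->
  0 < s -> s <= Cs * m -> A * A = eta * m ->
  4 * p22 * eta * m <= mu2 -> 2 * M3 ^ 2 * Cs ^ 2 * m < eta * mu2 ^ 2 ->
  2 * A * ((- mu2 - p21 * v ^ 2 + p22 * A ^ 2) * A + M3 * s) < 0.
Proof.
  intros Hmu HM3 Hp21 Hp22 Hm Heta Hs HsC HA H1 H2.
  assert (E : 2 * A * ((- mu2 - p21 * v ^ 2 + p22 * A ^ 2) * A + M3 * s) =
     2 * (A * A) * (- mu2 + p22 * (A * A)) - 2 * p21 * (v * v) * (A * A) + 2 * M3 * A * s) by ring.
  rewrite E, HA.
  assert (AM : 2 * M3 * A * s <= mu2 / 2 * (A * A) + 2 * M3 ^ 2 * s ^ 2 / mu2).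
  { assert (0 <= mu2 / 2 * (A - 2 * M3 * s / mu2) ^ 2).
    { apply Rmult_le_pos; [lra | apply pow2_ge_0]. }
    assert (mu2 / 2 * (A - 2 * M3 * s / mu2) ^ 2 = mu2 / 2 * (A * A) + 2 * M3 ^ 2 * s ^ 2 / mu2 - 2 * M3 * A * s)
      by (field; lra).
    lra. }
  rewrite HA in AM.
  assert (Hs2 : s ^ 2 <= (Cs * m) ^ 2) by (apply pow_incr; lra).
  assert (Hfrac : 2 * M3 ^ 2 * s ^ 2 / mu2 <= 2 * M3 ^ 2 * (Cs * m) ^ 2 / mu2).
  { unfold Rdiv. apply Rmult_le_compat_r; [left; apply Rinv_0_lt_compat; lra|].
    apply Rmult_le_compat_l; [nra | lra]. }
  assert (Hk : 2 * M3 ^ 2 * (Cs * m) ^ 2 / mu2 < eta * mu2 * m).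
  { apply (Rmult_lt_reg_r mu2); [lra|].
    replace (2 * M3 ^ 2 * (Cs * m) ^ 2 / mu2 * mu2) with ((2 * M3 ^ 2 * Cs ^ 2 * m) * m) by (field; lra).
    nra. }
  assert (0 <= 2 * p21 * (v * v) * (eta * m)).
  { apply Rmult_le_pos; [|nra]. apply Rmult_le_pos; nra. }
  assert (2 * (eta * m) * (p22 * (eta * m)) <= eta * m * mu2 / 2) by nra.
  nra.
Qed.

Lemma local_lip (f : R -> R) x l : is_derive f x l ->
  exists d, 0 < d /\ forall y, Rabs (y - x) < d -> Rabs (f y - f x) <= (Rabs l + 1) * Rabs (y - x).
Proof.
  intros H. apply is_derive_Reals in H.
  destruct (H 1 Rlt_0_1) as [d Hd].
  exists d. split; [apply cond_pos|].
  intros y Hy.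
  destruct (Req_dec y x) as [E|E].
  - rewrite E. replace (f x - f x) with 0 by ring. replace (x - x) with 0 by ring. rewrite Rabs_R0. lra.
  - assert (Hh : y - x <> 0) by lra.
    specialize (Hd (y - x) Hh Hy).
    replace (x + (y - x)) with y in Hd by ring.
    replace (f y - f x) with (((f y - f x) / (y - x) - l) * (y - x) + l * (y - x)) by (field; auto).
    eapply Rle_trans; [apply Rabs_triang|].
    rewrite !Rabs_mult.
    assert (0 <= Rabs (y - x)) by apply Rabs_pos.
    nra.
Qed.

Lemma pos_near (f : R -> R) x l : is_derive f x l -> 0 < f x ->
  exists d, 0 < d /\ forall y, Rabs (y - x) < d -> 0 < f y.
Proof.
  intros H Hp. destruct (local_lip f x l H) as [d [Hd Hl]].
  assert (HL : 0 < Rabs l + 1) by (generalize (Rabs_pos l); lra).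
  exists (Rmin d (f x / (Rabs l + 1))). split.
  - apply Rmin_pos; [lra | apply Rdiv_lt_0_compat; lra].
  - intros y Hy.
    assert (H1 : Rabs (y - x) < d) by (eapply Rlt_le_trans; [exact Hy | apply Rmin_l]).
    assert (H2 : Rabs (y - x) < f x / (Rabs l + 1)) by (eapply Rlt_le_trans; [exact Hy | apply Rmin_r]).
    specialize (Hl y H1).
    assert ((Rabs l + 1) * Rabs (y - x) < f x).
    { apply (Rmult_lt_compat_l (Rabs l + 1)) in H2; [|lra].
      replace ((Rabs l + 1) * (f x / (Rabs l + 1))) with (f x) in H2 by (field; lra). lra. }
    apply Rabs_le_between in Hl. lra.
Qed.

Lemma nonneg_left (f : R -> R) x l a : is_derive f x l -> a < x ->
  (forall y, a <= y < x -> 0 < f y) -> 0 <= f x.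
Proof.
  intros H Hax Hpos.
  destruct (Rle_or_lt 0 (f x)) as [h|h]; [exact h|]. exfalso.
  assert (Hopp : is_derive (fun y => - f y) x (- l)).
  { apply is_derive_opp in H. exact H. }
  destruct (pos_near (fun y => - f y) x (- l) Hopp) as [d [Hd Hn]]; [lra|].
  set (y := x - Rmin d (x - a) / 2).
  assert (0 < Rmin d (x - a)) by (apply Rmin_pos; lra).
  assert (Rmin d (x - a) <= d) by apply Rmin_l.
  assert (Rmin d (x - a) <= x - a) by apply Rmin_r.
  assert (Hy : Rabs (y - x) < d).
  { unfold y. replace (x - Rmin d (x - a) / 2 - x) with (- (Rmin d (x - a) / 2)) by ring.
    rewrite Rabs_Ropp, Rabs_right; lra. }
  specialize (Hn y Hy). specialize (Hpos y). unfold y in *. 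
  assert (0 < f (x - Rmin d (x - a) / 2)) by (apply Hpos; lra). lra.
Qed.

Lemma deriv_pos_contra (f : R -> R) x l a : is_derive f x l -> 0 < l -> f x = 0 -> a < x ->
  (forall y, a <= y < x -> 0 < f y) -> False.
Proof.
  intros H Hl Hf Hax Hpos. apply is_derive_Reals in H.
  destruct (H l Hl) as [d Hd].
  set (h := - (Rmin d (x - a) / 2)).
  assert (0 < Rmin d (x - a)) by (apply Rmin_pos; [apply cond_pos | lra]).
  assert (Rmin d (x - a) <= d) by apply Rmin_l.
  assert (Rmin d (x - a) <= x - a) by apply Rmin_r.
  assert (Hh0 : h <> 0) by (unfold h; lra).
  assert (Hhd : Rabs h < d) by (unfold h; rewrite Rabs_Ropp, Rabs_right; lra).
  specialize (Hd h Hh0 Hhd). rewrite Hf in Hd.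
  assert (Hp : 0 < f (x + h)) by (apply Hpos; unfold h; lra).
  apply Rabs_def2 in Hd. destruct Hd as [_ Hd].
  assert (Hq : (f (x + h) - 0) / h < 0).
  { unfold Rdiv. rewrite Rminus_0_r. apply Rmult_pos_neg; [lra|]. apply Rinv_lt_0_compat. unfold h; lra. }
  lra.
Qed.

Lemma barrier (g1 g2 d1 d2 : R -> R) a b : a <= b ->
  (forall u, a <= u <= b -> is_derive g1 u (d1 u) /\ is_derive g2 u (d2 u)) ->
  0 < g1 a -> 0 < g2 a ->
  (forall u, a < u <= b -> g1 u = 0 -> 0 <= g2 u -> 0 < d1 u) ->
  (forall u, a < u <= b -> g2 u = 0 -> 0 <= g1 u -> 0 < d2 u) ->
  0 < g1 b /\ 0 < g2 b.
Proof.
  intros Hab Hd Ha1 Ha2 H1 H2.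
  set (E := fun x => a <= x <= b /\ forall u, a <= u <= x -> 0 < g1 u /\ 0 < g2 u).
  assert (Hb : bound E) by (exists b; intros x [Hx _]; lra).
  assert (He : exists x, E x).
  { exists a. split; [lra|]. intros u Hu. replace u with a by lra. auto. }
  destruct (completeness E Hb He) as [xs [Hub Hlub]].
  assert (Haxs : a <= xs) by (apply Hub; destruct He as [x0 Hx0]; split; [lra|];
    intros u Hu; replace u with a by lra; auto).
  assert (Hxsb : xs <= b) by (apply Hlub; intros x [Hx _]; lra).
  assert (F1 : forall u, a <= u < xs -> 0 < g1 u /\ 0 < g2 u).
  { intros u Hu.
    destruct (classic (exists x, E x /\ u < x)) as [[x [[_ Hx] Hux]]|Hn].
    - apply Hx; lra.
    - exfalso. assert (xs <= u); [|lra]. apply Hlub. intros x Ex.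
      destruct (Rle_or_lt x u) as [h|h]; [exact h|]. exfalso; apply Hn; eauto. }
  destruct (Hd xs (conj Haxs Hxsb)) as [D1 D2].
  assert (N1 : 0 <= g1 xs /\ 0 <= g2 xs).
  { destruct (Req_dec xs a) as [E0|E0].
    - rewrite E0; lra.
    - split.
      + apply (nonneg_left g1 xs (d1 xs) a); auto; [lra|]. intros y Hy; apply F1; auto.
      + apply (nonneg_left g2 xs (d2 xs) a); auto; [lra|]. intros y Hy; apply F1; auto. }
  assert (P1 : 0 < g1 xs).
  { destruct N1 as [[h|h] N2]; [exact h|]. exfalso.
    assert (Hax : a < xs) by (destruct (Req_dec xs a); [subst; lra | lra]).
    refine (deriv_pos_contra g1 xs (d1 xs) a _ _ _ Hax _); auto.
    all: try (intros y Hy; apply F1; auto). }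
  assert (P2 : 0 < g2 xs).
  { destruct N1 as [N0 [h|h]]; [exact h|]. exfalso.
    assert (Hax : a < xs) by (destruct (Req_dec xs a); [subst; lra | lra]).
    refine (deriv_pos_contra g2 xs (d2 xs) a _ _ _ Hax _); auto.
    all: try (intros y Hy; apply F1; auto). }
  destruct (Req_dec xs b) as [Eb|Eb].
  - rewrite <- Eb; auto.
  - exfalso.
    destruct (pos_near g1 xs (d1 xs) D1 P1) as [e1 [He1 Hn1]].
    destruct (pos_near g2 xs (d2 xs) D2 P2) as [e2 [He2 Hn2]].
    set (y := xs + Rmin (Rmin e1 e2) (b - xs) / 2).
    assert (0 < Rmin (Rmin e1 e2) (b - xs)) by (apply Rmin_pos; [apply Rmin_pos|]; lra).
    assert (Rmin (Rmin e1 e2) (b - xs) <= Rmin e1 e2) by apply Rmin_l.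
    assert (Rmin e1 e2 <= e1) by apply Rmin_l.
    assert (Rmin e1 e2 <= e2) by apply Rmin_r.
    assert (Rmin (Rmin e1 e2) (b - xs) <= b - xs) by apply Rmin_r.
    assert (Ey : E y).
    { split; [unfold y; lra|]. intros u Hu.
      destruct (Rlt_or_le u xs) as [h|h]; [apply F1; lra|].
      assert (Rabs (u - xs) < Rmin e1 e2) by (rewrite Rabs_right; unfold y in Hu; lra).
      split; [apply Hn1 | apply Hn2]; lra. }
    specialize (Hub y Ey). unfold y in Hub. lra.
Qed.

Lemma D_g1 (v s : R -> R) t dv ds k1 k2 k3 :
  is_derive v t dv -> is_derive s t ds ->
  is_derive (fun u => k1 - (v u * v u + k2 * s u + k3 * v u)) t
    (- (2 * v t * dv + k2 * ds + k3 * dv)).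
Proof.
  intros Hv Hs.
  apply is_derive_Reals in Hv. apply is_derive_Reals in Hs. apply is_derive_Reals.
  replace (- (2 * v t * dv + k2 * ds + k3 * dv)) with (0 - ((dv * v t + v t * dv) + k2 * ds + k3 * dv)) by ring.
  apply (derivable_pt_lim_minus (fun _ => k1) (fun u => v u * v u + k2 * s u + k3 * v u)).
  - apply derivable_pt_lim_const.
  - apply (derivable_pt_lim_plus (fun u => v u * v u + k2 * s u) (fun u => k3 * v u)).
    + apply (derivable_pt_lim_plus (fun u => v u * v u) (fun u => k2 * s u)).
      * apply (derivable_pt_lim_mult v v). all: auto.
      * apply (derivable_pt_lim_scal s k2). auto.
    + apply (derivable_pt_lim_scal v k3). auto.
Qed.

Lemma D_g2 (A : R -> R) t dA k :
  is_derive A t dA ->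
  is_derive (fun u => k - A u * A u) t (- (2 * A t * dA)).
Proof.
  intros Hv. apply is_derive_Reals in Hv. apply is_derive_Reals.
  replace (- (2 * A t * dA)) with (0 - (dA * A t + A t * dA)) by ring.
  apply (derivable_pt_lim_minus (fun _ => k) (fun u => A u * A u)).
  - apply derivable_pt_lim_const.
  - apply (derivable_pt_lim_mult A A); auto.
Qed.

Lemma lim_eventually_lt (f : R -> R) (L K : R) : is_lim f m_infty L -> L < K ->
  exists M, forall y, y < M -> f y < K.
Proof.
  intros H HL. apply is_lim_spec in H.
  assert (Hp : 0 < K - L) by lra.
  destruct (H (mkposreal _ Hp)) as [M HM].
  exists M. intros y Hy. specialize (HM y Hy). simpl in HM.
  apply Rabs_def2 in HM. lra.
Qed.

Lemma lim_psi (v s : R -> R) (ve k2 k3 : R) : is_lim v m_infty ve -> is_lim s m_infty 0 ->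
  is_lim (fun u => v u * v u + k2 * s u + k3 * v u) m_infty (ve * ve + k2 * 0 + k3 * ve).
Proof.
  intros Hv Hs.
  apply (is_lim_plus _ _ m_infty (ve * ve + k2 * 0) (k3 * ve)).
  - apply (is_lim_plus _ _ m_infty (ve * ve) (k2 * 0)).
    + apply (is_lim_mult v v m_infty ve ve); auto. simpl. auto.
    + apply (is_lim_scal_l s k2 m_infty 0); auto.
    + reflexivity.
  - apply (is_lim_scal_l v k3 m_infty ve); auto.
  - reflexivity.
Qed.

Lemma lim_sq (A : R -> R) : is_lim A m_infty 0 -> is_lim (fun u => A u * A u) m_infty (0 * 0).
Proof.
  intros H. apply (is_lim_mult A A m_infty 0 0); auto. simpl. auto.
Qed.

Theorem lemma3
  (alpha M1 M2 M3 p11 p12 p21 p22 mu2 : R)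
  (Halpha : 0 < alpha) (HM2 : 0 < M2) (HM3 : 0 < M3)
  (Hp11 : 0 < p11) (Hp12 : 0 < p12) (Hp21 : 0 < p21) (Hp22 : 0 < p22)
  (Hp : p12 * p21 < p11 * p22)
  (Hmu2 : 0 < mu2) :
  exists C delta : R, 0 < C /\ 0 < delta /\
    forall mu1 : R, - delta < mu1 -> mu1 < 0 ->
    forall (T : Rbar) (v A s : R -> R),
      unstable_branch_solution alpha M1 M2 M3 p11 p12 p21 p22 mu1 mu2 T v A s ->
      forall t : R, 0 < t -> Rbar_lt t T -> Rabs (s t) <= C * Rabs mu1.
Proof.
  pose (c := 2 / p11).
  assert (Hc : 0 < c) by (unfold c; apply Rdiv_lt_0_compat; lra).
  assert (HcP : c * p11 = 2) by (unfold c; field; lra).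
  clearbody c.
  pose (Cs := 5 * alpha * c / (4 * M2)).
  assert (HCs : Cs * (4 * M2) = 5 * alpha * c) by (unfold Cs; field; lra).
  assert (HCs0 : 0 < Cs) by (unfold Cs; apply Rdiv_lt_0_compat; nra).
  clearbody Cs.
  pose (lam := 4 * Rabs M1 * Cs + 108 / alpha + 1).
  assert (Hab0 : 0 <= 4 * Rabs M1 * Cs) by (generalize (Rabs_pos M1); nra).
  assert (Hal : 108 / alpha * alpha = 108) by (field; lra).
  assert (Hal0 : 0 < 108 / alpha) by (apply Rdiv_lt_0_compat; lra).
  assert (HL1 : 4 * Rabs M1 * Cs <= lam) by (unfold lam; lra).
  assert (HL2 : 108 <= lam * alpha) by (unfold lam; nra).
  assert (HL3 : 1 <= lam) by (unfold lam; lra).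
  clearbody lam.
  pose (eta := 1 / (8 * p12)).
  assert (Heta : eta * (8 * p12) = 1) by (unfold eta; field; lra).
  assert (Heta0 : 0 < eta) by (unfold eta; apply Rdiv_lt_0_compat; lra).
  clearbody eta.
  assert (Hd1 : 0 < c / (320 * lam ^ 2)) by (apply Rdiv_lt_0_compat; nra).
  assert (Hd2 : 0 < mu2 / (4 * p22 * eta)) by (apply Rdiv_lt_0_compat; nra).
  assert (Hd3 : 0 < eta * mu2 ^ 2 / (2 * M3 ^ 2 * Cs ^ 2)).
  { apply Rdiv_lt_0_compat; [nra|]. assert (0 < M3 ^ 2) by nra. assert (0 < Cs ^ 2) by nra. nra. }
  exists Cs, (Rmin (c / (320 * lam ^ 2)) (Rmin (mu2 / (4 * p22 * eta)) (eta * mu2 ^ 2 / (2 * M3 ^ 2 * Cs ^ 2)))).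
  split; [exact HCs0|]. split; [repeat apply Rmin_pos; auto|].
  intros mu1 Hdel Hneg T v A s [Hder [Hlv [HlA [Hls Hspos]]]] t Ht Htt.
  set (m := - mu1).
  assert (Hm : 0 < m) by (unfold m; lra).
  assert (Hmd : m < Rmin (c / (320 * lam ^ 2)) (Rmin (mu2 / (4 * p22 * eta)) (eta * mu2 ^ 2 / (2 * M3 ^ 2 * Cs ^ 2)))) by (unfold m; lra).
  assert (Hm1 : m < c / (320 * lam ^ 2)) by (eapply Rlt_le_trans; [exact Hmd | apply Rmin_l]).
  assert (Hm23 : m < Rmin (mu2 / (4 * p22 * eta)) (eta * mu2 ^ 2 / (2 * M3 ^ 2 * Cs ^ 2)))
    by (eapply Rlt_le_trans; [exact Hmd | apply Rmin_r]).
  assert (Hm2 : m < mu2 / (4 * p22 * eta)) by (eapply Rlt_le_trans; [exact Hm23 | apply Rmin_l]).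
  assert (Hm3 : m < eta * mu2 ^ 2 / (2 * M3 ^ 2 * Cs ^ 2)) by (eapply Rlt_le_trans; [exact Hm23 | apply Rmin_r]).
  clear Hmd Hm23.
  assert (S1 : 320 * lam ^ 2 * m <= c).
  { apply Rmult_lt_compat_l with (r := 320 * lam ^ 2) in Hm1; [|nra].
    replace (320 * lam ^ 2 * (c / (320 * lam ^ 2))) with c in Hm1 by (field; nra). lra. }
  assert (S4 : 4 * p22 * eta * m <= mu2).
  { apply Rmult_lt_compat_l with (r := 4 * p22 * eta) in Hm2; [|nra].
    replace (4 * p22 * eta * (mu2 / (4 * p22 * eta))) with mu2 in Hm2 by (field; nra). lra. }
  assert (S5 : 2 * M3 ^ 2 * Cs ^ 2 * m < eta * mu2 ^ 2).
  { assert (0 < M3 ^ 2) by nra. assert (0 < Cs ^ 2) by nra.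
    apply Rmult_lt_compat_l with (r := 2 * M3 ^ 2 * Cs ^ 2) in Hm3; [|nra].
    replace (2 * M3 ^ 2 * Cs ^ 2 * (eta * mu2 ^ 2 / (2 * M3 ^ 2 * Cs ^ 2))) with (eta * mu2 ^ 2) in Hm3
      by (field; nra). lra. }
  clear Hm1 Hm2 Hm3.
  set (ve := v_ep2 mu1 p11) in *.
  assert (Hve : ve * ve = m / p11).
  { unfold ve, v_ep2. apply sqrt_sqrt. unfold m. apply Rdiv_le_0_compat; lra. }
  assert (Hve0 : 0 <= ve) by (unfold ve, v_ep2; apply sqrt_pos).
  clearbody ve.
  assert (Hstart : ve * ve + M2 / alpha * 0 + lam * m * ve < c * m).
  { assert (Hsq : (lam * ve * p11) ^ 2 < 1).
    { replace ((lam * ve * p11) ^ 2) with (lam ^ 2 * (ve * ve) * p11 ^ 2) by ring.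
      rewrite Hve. replace (lam ^ 2 * (m / p11) * p11 ^ 2) with (lam ^ 2 * m * p11) by (field; lra).
      nra. }
    assert (Hlt : lam * ve * p11 < 1).
    { destruct (Rlt_or_le (lam * ve * p11) 1) as [h|h]; [exact h|]. nra. }
    assert (E1 : ve * ve * p11 = m) by (rewrite Hve; field; lra).
    assert (E2 : (ve * ve + M2 / alpha * 0 + lam * m * ve) * p11 < c * m * p11).
    { replace ((ve * ve + M2 / alpha * 0 + lam * m * ve) * p11) with (ve * ve * p11 + m * (lam * ve * p11)) by (field; lra).
      replace (c * m * p11) with (2 * m) by (rewrite <- HcP; ring). nra. }
    nra. }
  destruct (lim_eventually_lt _ _ _ (lim_psi v s ve (M2 / alpha) (lam * m) Hlv Hls) Hstart) as [Ma HMa].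
  assert (HA0 : 0 * 0 < eta * m) by nra.
  destruct (lim_eventually_lt _ _ _ (lim_sq A HlA) HA0) as [Mb HMb].
  set (a := Rmin (Rmin Ma Mb) t - 1).
  assert (Ha1 : a < Ma) by (unfold a; generalize (Rmin_l (Rmin Ma Mb) t) (Rmin_l Ma Mb); lra).
  assert (Ha2 : a < Mb) by (unfold a; generalize (Rmin_l (Rmin Ma Mb) t) (Rmin_r Ma Mb); lra).
  assert (Ha3 : a <= t) by (unfold a; generalize (Rmin_r (Rmin Ma Mb) t); lra).
  assert (HT : forall u, u <= t -> Rbar_lt u T).
  { intros u Hu. destruct T as [T'| |]; simpl in *; auto; lra. }
  pose (rv := fun u => rhs_v mu1 p11 p12 M2 (v u) (A u) (s u)).
  pose (rA := fun u => rhs_A mu2 p21 p22 M3 (v u) (A u) (s u)).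
  pose (rs := fun u => rhs_s alpha M1 (v u) (s u)).
  destruct (barrier (fun u => c * m - (v u * v u + M2 / alpha * s u + lam * m * v u))
     (fun u => eta * m - A u * A u)
     (fun u => - (2 * v u * rv u + M2 / alpha * rs u + lam * m * rv u))
     (fun u => - (2 * A u * rA u)) a t Ha3) as [G1 G2].
  - intros u Hu. destruct (Hder u (HT u (proj2 Hu))) as [Dv [DA Ds]]. split.
    + apply D_g1; auto.
    + apply D_g2; auto.
  - specialize (HMa a Ha1). simpl in HMa. lra.
  - specialize (HMb a Ha2). simpl in HMb. lra.
  - intros u Hu E1 E2.
    assert (K := core_psi p11 alpha M2 M1 p12 m lam c Cs eta (v u) (A u) (s u)
      Hp11 Halpha HM2 Hp12 Hm Hc HcP HCs HL1 HL2 HL3 S1 Heta (Hspos u (HT u (proj2 Hu))) ltac:(lra) ltac:(lra)).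
    unfold rv, rs, rhs_v, rhs_s. unfold m in *. ring_simplify in K. ring_simplify. lra.
  - intros u Hu E1 E2.
    assert (Hsu := Hspos u (HT u (proj2 Hu))).
    assert (HsC : s u <= Cs * m) by (apply (core_sbound alpha M2 m lam c Cs (v u) (s u)); auto; lra).
    assert (K := core_A mu2 M3 p21 p22 m eta Cs (v u) (A u) (s u)
      Hmu2 HM3 Hp21 Hp22 Hm Heta0 Hsu HsC ltac:(lra) S4 S5).
    unfold rA, rhs_A. lra.
  - simpl in G1.
    assert (Hst := Hspos t Htt).
    assert (HsC : s t <= Cs * m) by (apply (core_sbound alpha M2 m lam c Cs (v t) (s t)); auto; lra).
    rewrite Rabs_right by lra. rewrite Rabs_left by lra. fold m. exact HsC.
Qed.
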